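(* For $n_1,n_2\ge 1$ and irreducible vectors $\vec{\mathsf b}\in\mathrm{Vec}(\mathrm{E(NE)}^{n_1-1})$, $\vec{\mathsf b}'\in\mathrm{Vec}(\mathrm{E(NE)}^{n_2-1})$, define $$\vec{\mathsf b}+\vec{\mathsf b}'=(\mathsf b_0,\dots,\mathsf b_{2n_1-1},\ \mathsf b'_0+n_1,\dots,\mathsf b'_{2n_2-1}+n_1)\in\mathrm{Vec}(\mathrm{E(NE)}^{n_1+n_2-1}).$$ Then every $\vec{\mathsf b}\in\mathrm{Vec}(\mathrm{E(NE)}^{n-1})$ ($n\ge1$) can be written as a sum $\vec{\mathsf b}^{(1)}+\cdots+\vec{\mathsf b}^{(r)}$ of irreducible vectors $\vec{\mathsf b}^{(i)}\in\mathrm{Vec}(\mathrm{E(NE)}^{k_i-1})$ with $k_1+\cdots+k_r=n$ (the sum being taken left to right, with the shift by the total size of the preceding summands). Moreover, $\vec{\mathsf b}$ is $t$-$\mathsf{Pop}$-sortable in $\mathrm{Vec}(\mathrm{E(NE)}^{n-1})$ if and only if each $\vec{\mathsf b}^{(i)}$ is $t$-$\mathsf{Pop}$-sortable in $\mathrm{Vec}(\mathrm{E(NE)}^{k_i-1})$.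
   Context: For $\nu=\mathrm{E(NE)}^{n-1}$ (a path of $2n-1$ steps ending at height $n-1$), $\mathrm{Vec}(\nu)$ is the set of integer vectors $(\mathsf b_0,\dots,\mathsf b_{2n-1})$ with $\mathsf b_{2k+1}=k$ for $0\le k\le n-1$, $\lfloor i/2\rfloor\le\mathsf b_i\le n-1$ for all $i$, and such that $\mathsf b_i=k$ implies $\mathsf b_j\le k$ for all $i+1\le j\le 2k+1$. With the componentwise order it is a finite lattice isomorphic to the Tamari lattice $\mathrm{Tam}_n$. A vector is irreducible if $\mathsf b_0=\mathsf b_{2n-1}$ (i.e. $\mathsf b_0=n-1$). For a finite lattice $M$ with minimum $\hat0$, $\mathsf{Pop}_M(x)=\bigwedge(\{y: y\lessdot x\}\cup\{x\})$ and $x$ is $t$-$\mathsf{Pop}$-sortable if $\mathsf{Pop}_M^t(x)=\hat 0$. *)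

(* Defs.v *)
From mathcomp Require Import all_boot.
Set Implicit Arguments. Unset Strict Implicit. Unset Printing Implicit Defensive.

(* Vec(E(NE)^{n-1}) membership *)
Definition in_vec (n : nat) (b : seq nat) : bool :=
  [&& size b == 2 * n,
      [forall k : 'I_n, nth 0 b (2 * k + 1) == k],
      [forall i : 'I_(2 * n), (i./2 <= nth 0 b i) && (nth 0 b i <= n.-1)] &
      [forall i : 'I_(2 * n), forall j : 'I_(2 * n),
         ((i.+1 <= j) && (j <= 2 * nth 0 b i + 1)) ==> (nth 0 b j <= nth 0 b i)]].

Definition irreducible_vec (n : nat) (b : seq nat) : bool :=
  nth 0 b 0 == nth 0 b (2 * n).-1.

(* Iterated sum of vectors, left to right: each summand (k, b) is a vector of
   Vec(E(NE)^{k-1}); later summands are shifted by the total size of the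
   preceding ones.  b + b' = b ++ map (+ n1) b'. *)
Fixpoint vsum (ds : seq (nat * seq nat)) : seq nat :=
  match ds with
  | [::] => [::]
  | (k, b) :: ds' => b ++ map (addn k) (vsum ds')
  end.

Definition vle (b c : seq nat) : bool := all2 leq b c.
Definition vlt (b c : seq nat) : bool := vle b c && (b != c).

Definition covby (n : nat) (y x : seq nat) : Prop :=
  [/\ in_vec n y, in_vec n x, vlt y x &
      forall w, in_vec n w -> vlt y w -> ~~ vlt w x].

Definition pop_set (n : nat) (x y : seq nat) : Prop := y = x \/ covby n y x.

Definition is_pop (n : nat) (x z : seq nat) : Prop :=
  [/\ in_vec n z,
      forall y, pop_set n x y -> vle z y &
      forall w, in_vec n w -> (forall y, pop_set n x y -> vle w y) -> vle w z].

Inductive pop_iter (n : nat) : nat -> seq nat -> seq nat -> Prop :=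
  | pop_iter0 x : pop_iter n 0 x x
  | pop_iterS t x y z : is_pop n x y -> pop_iter n t y z -> pop_iter n t.+1 x z.

Definition is_bottom (n : nat) (z : seq nat) : Prop :=
  in_vec n z /\ forall w, in_vec n w -> vle z w.

Definition pop_sortable (n t : nat) (x : seq nat) : Prop :=
  exists z, pop_iter n t x z /\ is_bottom n z.

(* Main.v *)
Require Import Defs.
From mathcomp Require Import all_boot zify.
Set Implicit Arguments. Unset Strict Implicit. Unset Printing Implicit Defensive.

Definition vadd k (x y : seq nat) := x ++ map (addn k) y.

Lemma nth_vadd k x y i : nth 0 (vadd k x y) i =
  if i < size x then nth 0 x i else if i - size x < size y then k + nth 0 y (i - size x) else 0.
Proof.
rewrite /vadd nth_cat; case: ifP => // _; case: ifP => H.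
- by rewrite (nth_map 0).
- by rewrite nth_default // size_map leqNgt H.
Qed.

Lemma size_vadd k x y : size (vadd k x y) = size x + size y.
Proof. by rewrite size_cat size_map. Qed.

Lemma vleP a b : vle a b <-> size a = size b /\ forall i, nth 0 a i <= nth 0 b i.
Proof.
rewrite /vle; elim: a b => [|x a IH] [|y b] //=.
- by split => //; case.
- by split => //; case.
- have IHb := IH b; split.
  + case/andP => xy /IHb [-> H]; split => // -[|i] //=.
  + case=> [[E] H]; rewrite (H 0) /=; apply/IHb; split => // i; exact: (H i.+1).
Qed.

Lemma vle_refl a : vle a a.
Proof. by apply/vleP. Qed.

Lemma vle_trans a b c : vle a b -> vle b c -> vle a c.
Proof. move=> /vleP[s1 h1] /vleP[s2 h2]; apply/vleP; split; first congruence.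
move=> i; exact: leq_trans (h1 i) (h2 i). Qed.

Lemma vle_anti a b : vle a b -> vle b a -> a = b.
Proof. move=> /vleP[s1 h1] /vleP[s2 h2]; apply: (eq_from_nth (x0:=0)) => // i _.
apply/eqP; rewrite eqn_leq h1 h2 //. Qed.

Lemma vle_vadd k x1 x2 y1 y2 : size x1 = size y1 ->
  vle (vadd k x1 x2) (vadd k y1 y2) = vle x1 y1 && vle x2 y2.
Proof.
move=> hs; apply/idP/andP.
- move=> /vleP[]; rewrite !size_vadd hs => s H; split; apply/vleP; split; try lia.
  + move=> i; case: (ltnP i (size y1)) => hi.
    * by move: (H i); rewrite !nth_vadd hs hi.
    * by rewrite !nth_default // hs.
  + move=> i; move: (H (i + size y1)); rewrite !nth_vadd hs ltnNge leq_addl /= addnK.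
    have -> : size y2 = size x2 by lia.
    case: ifP => hi; first by rewrite leq_add2l.
    move=> _; move/negbT: hi; rewrite -leqNgt => hi.
    by rewrite !nth_default //; lia.
- case=> /vleP[s1 h1] /vleP[s2 h2]; apply/vleP; rewrite !size_vadd; split; first lia.
  move=> i; rewrite !nth_vadd hs s2; case: ifP => _ //; case: ifP => _ //.
  by rewrite leq_add2l.
Qed.

Lemma vadd_inj k x1 x2 y1 y2 : size x1 = size y1 -> vadd k x1 x2 = vadd k y1 y2 -> x1 = y1 /\ x2 = y2.
Proof.
move=> hs E.
have E1 : x1 = y1 by move: (congr1 (take (size x1)) E); rewrite /vadd hs !take_size_cat.
subst; split => //.
move: E => /eqP; rewrite /vadd eqseq_cat // => /andP[_ /eqP].
by apply: inj_map => a b /eqP; rewrite eqn_add2l => /eqP.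
Qed.
Lemma half_le i m : (i./2 <= m) = (i <= 2*m+1).
Proof.
have := odd_double_half i; rewrite -muln2.
case: (odd i) => /= H; apply/idP/idP; lia.
Qed.

Definition IV n b := [/\ size b = 2*n, (forall k, k < n -> nth 0 b (2*k+1) = k),
  (forall i, i < 2*n -> i <= 2 * nth 0 b i + 1 /\ nth 0 b i < n) &
  (forall i j, i < j -> j < 2*n -> j <= 2 * nth 0 b i + 1 -> nth 0 b j <= nth 0 b i)].

Lemma in_vecP n b : in_vec n b <-> IV n b.
Proof.
split.
- case/and4P => /eqP Hs /forallP H1 /forallP H2 /forallP H3; split => //.
  + move=> k kn; exact/eqP/(H1 (Ordinal kn)).
  + move=> i ilt; move: (H2 (Ordinal ilt)) => /= /andP[]; rewrite half_le => A B; split => //; lia.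
  + move=> i j ij jlt jle; have ilt : i < 2 * n by lia.
    move: (H3 (Ordinal ilt)) => /forallP /(_ (Ordinal jlt)) /implyP /= -> //.
    by rewrite ij jle.
- case=> Hs H1 H2 H3; apply/and4P; split.
  + by apply/eqP.
  + apply/forallP => k; apply/eqP; exact: H1.
  + apply/forallP => i; move: (H2 i (ltn_ord i)) => [A B]; rewrite half_le A /=; lia.
  + apply/forallP => i; apply/forallP => j; apply/implyP => /andP[A B]; exact: H3.
Qed.

Lemma vadd_in n1 n2 x1 x2 : IV n1 x1 -> IV n2 x2 -> IV (n1+n2) (vadd n1 x1 x2).
Proof.
case=> s1 o1 r1 c1 [s2 o2 r2 c2]; split.
- rewrite size_vadd; lia.
- move=> k kn; rewrite nth_vadd s1 s2; case: ifP => h.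
  + apply: o1; lia.
  + have -> : 2 * k + 1 - 2 * n1 = 2 * (k - n1) + 1 by lia.
    rewrite ifT; last lia. rewrite o2; lia.
- move=> i ilt; rewrite nth_vadd s1 s2; case: ifP => h.
  + have := r1 i h; lia.
  + rewrite ifT; last lia. have := r2 (i - 2 * n1); lia.
- move=> i j ij jlt; rewrite !nth_vadd s1 s2; case: (ltnP i (2 * n1)) => hi.
  + have [_ h] := r1 i hi => jle.
    have hj : j < 2 * n1 by lia.
    rewrite hj; by apply: c1.
  + have hi' : (i < 2 * n1) = false by lia.
    have hj' : (j < 2 * n1) = false by lia.
    have hi2 : i - 2 * n1 < 2 * n2 by lia.
    have hj2 : j - 2 * n1 < 2 * n2 by lia.
    rewrite hj' hi2 hj2 => jle; rewrite leq_add2l; apply: c2; lia.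
Qed.

Lemma nth_take0 m (w : seq nat) i : nth 0 (take m w) i = if i < m then nth 0 w i else 0.
Proof. case: ifP => h; first by rewrite nth_take.
case: (ltnP i (size (take m w))) => h2; last by rewrite nth_default.
move: h2; rewrite size_take; case: ifP; lia. Qed.

Lemma nth_subdrop m k (w : seq nat) i : nth 0 (map (subn^~ k) (drop m w)) i = nth 0 w (m + i) - k.
Proof.
case: (ltnP i (size (drop m w))) => h.
- by rewrite (nth_map 0) // nth_drop.
- rewrite nth_default; last by rewrite size_map.
  rewrite nth_default //; move: h; rewrite size_drop; lia.
Qed.

Lemma split_in n1 n2 w : IV (n1+n2) w -> (forall i, i < 2*n1 -> nth 0 w i < n1) ->
  [/\ IV n1 (take (2*n1) w), IV n2 (map (subn^~ n1) (drop (2*n1) w)) &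
      w = vadd n1 (take (2*n1) w) (map (subn^~ n1) (drop (2*n1) w))].
Proof.
case=> s o r c hlt.
have ge : forall i, 2 * n1 <= i < 2 * (n1 + n2) -> n1 <= nth 0 w i.
  move=> i /andP[h1 h2]; have := r i h2; lia.
split.
- split.
  + rewrite size_take s; case: ifP; lia.
  + move=> k kn; rewrite nth_take0 ifT; last lia. apply: o; lia.
  + move=> i ilt; rewrite nth_take0 ilt; split; last exact: hlt.
    have := r i; lia.
  + move=> i j ij jlt; rewrite !nth_take0 jlt ifT; last lia. move=> jle; apply: c => //; lia.
- split.
  + rewrite size_map size_drop s; lia.
  + move=> k kn; rewrite nth_subdrop.
    have -> : 2 * n1 + (2 * k + 1) = 2 * (n1 + k) + 1 by lia.
    rewrite o; lia.
  + move=> i ilt; rewrite nth_subdrop; have := r (2 * n1 + i); have := ge (2 * n1 + i); lia.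
  + move=> i j ij jlt; rewrite !nth_subdrop => jle.
    have := ge (2 * n1 + i); have := ge (2 * n1 + j); have := c (2 * n1 + i) (2 * n1 + j); lia.
- have st : size (take (2*n1) w) = 2*n1 by rewrite size_take s; case: ifP; lia.
  have sd : size (map (subn^~ n1) (drop (2*n1) w)) = 2*n2 by rewrite size_map size_drop s; lia.
  apply: (eq_from_nth (x0 := 0)).
  + rewrite size_vadd st sd s; lia.
  + move=> i ilt; rewrite nth_vadd st sd.
    case: ifP => h.
    * by rewrite nth_take0 h.
    * rewrite ifT; last lia. rewrite nth_subdrop.
      have := ge i; have -> : 2 * n1 + (i - 2 * n1) = i by lia. rewrite s in ilt. lia.
Qed.

Lemma size_inv n x : in_vec n x -> size x = 2 * n.
Proof. by move/in_vecP => []. Qed.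

Lemma vadd_inv n1 n2 x1 x2 : in_vec n1 x1 -> in_vec n2 x2 -> in_vec (n1+n2) (vadd n1 x1 x2).
Proof. move=> /in_vecP h1 /in_vecP h2; apply/in_vecP; exact: vadd_in. Qed.

Lemma down_split n1 n2 x1 x2 w : in_vec n1 x1 -> in_vec (n1+n2) w -> vle w (vadd n1 x1 x2) ->
  exists w1 w2, [/\ in_vec n1 w1, in_vec n2 w2 & w = vadd n1 w1 w2].
Proof.
move=> /in_vecP [s1 _ r1 _] /in_vecP iw /vleP [_ le].
have [A B C] := split_in iw (fun i hi => leq_ltn_trans (le i) (ltac:(rewrite nth_vadd s1 hi; exact: (proj2 (r1 i hi))))).
by exists (take (2*n1) w), (map (subn^~ n1) (drop (2*n1) w)); split => //; apply/in_vecP.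
Qed.

Lemma vlt_vadd k x1 x2 y1 y2 : size x1 = size y1 ->
  vlt (vadd k x1 x2) (vadd k y1 y2) = [&& vle x1 y1, vle x2 y2 & (x1 != y1) || (x2 != y2)].
Proof.
move=> hs; rewrite /vlt vle_vadd //.
case: (vle x1 y1) => //; case: (vle x2 y2) => //=.
apply/idP/idP.
- apply: contraNT; rewrite negb_or !negbK => /andP[/eqP -> /eqP ->]; by [].
- apply: contraTN => /eqP /vadd_inj [] // -> ->; by rewrite !eqxx.
Qed.

Lemma cov_l n1 n2 x1 y1 x2 : covby n1 y1 x1 -> in_vec n2 x2 ->
  covby (n1+n2) (vadd n1 y1 x2) (vadd n1 x1 x2).
Proof.
case=> iy ix lt H ix2; have sy := size_inv iy; have sx := size_inv ix.
split; try exact: vadd_inv.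
- rewrite vlt_vadd; last congruence. move: lt => /andP[-> ->]; by rewrite vle_refl.
- move=> w iw; rewrite [vlt _ w]/vlt => /andP[le1 ne1]; apply/negP => lt2.
  have [w1 [w2 [i1 i2 E]]] := down_split ix iw (proj1 (andP lt2)).
  subst w; have sw := size_inv i1.
  move: le1 lt2; rewrite vle_vadd ?vlt_vadd; try congruence.
  case/andP => a b /and3P [c d e].
  have E2 : w2 = x2 by apply: vle_anti.
  subst w2; rewrite eqxx orbF in e.
  have : vlt y1 w1 by rewrite /vlt a; apply: contraNN ne1 => /eqP ->.
  move/(H w1 i1)/negP; apply; by rewrite /vlt c e.
Qed.

Lemma cov_r n1 n2 x1 y2 x2 : in_vec n1 x1 -> covby n2 y2 x2 ->
  covby (n1+n2) (vadd n1 x1 y2) (vadd n1 x1 x2).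
Proof.
move=> ix1 [iy ix lt H]; have sx := size_inv ix1.
split; try exact: vadd_inv.
- rewrite vlt_vadd // vle_refl eqxx /=. by move: lt => /andP[-> ->].
- move=> w iw; rewrite [vlt _ w]/vlt => /andP[le1 ne1]; apply/negP => lt2.
  have [w1 [w2 [i1 i2 E]]] := down_split ix1 iw (proj1 (andP lt2)).
  subst w; have sw := size_inv i1.
  move: le1 lt2; rewrite vle_vadd ?vlt_vadd; try congruence.
  case/andP => a b /and3P [c d e].
  have E2 : w1 = x1 by apply: vle_anti.
  subst w1; rewrite eqxx /= in e.
  have : vlt y2 w2 by rewrite /vlt b; apply: contraNN ne1 => /eqP ->.
  move/(H w2 i2)/negP; apply; by rewrite /vlt d e.
Qed.

Lemma cov_dec n1 n2 x1 x2 y : in_vec n1 x1 -> in_vec n2 x2 -> covby (n1+n2) y (vadd n1 x1 x2) ->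
  exists y1 y2, y = vadd n1 y1 y2 /\
    ((y1 = x1 /\ covby n2 y2 x2) \/ (y2 = x2 /\ covby n1 y1 x1)).
Proof.
move=> ix1 ix2 [iy ix lt H].
have [y1 [y2 [i1 i2 E]]] := down_split ix1 iy (proj1 (andP lt)).
subst y; exists y1, y2; split => //.
have s1 := size_inv i1; have s1' := size_inv ix1.
move: lt; rewrite vlt_vadd; last congruence. case/and3P => a b c.
have [e1|n1'] := eqVneq y1 x1.
- subst y1; left; split => //; rewrite eqxx /= in c; split => //; first by rewrite /vlt b c.
  move=> w iw l1; apply/negP => l2.
  move: (H (vadd n1 x1 w) (vadd_inv ix1 iw)).
  rewrite !vlt_vadd // vle_refl eqxx /=.
  move: l1 l2 => /andP[-> ->] /andP[-> ->]; by move/(_ isT).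
- right; have [e2|n2'] := eqVneq y2 x2.
  + subst y2; split => //; split => //; first by rewrite /vlt a n1'.
    move=> w iw l1; apply/negP => l2.
    have sw := size_inv iw.
    move: (H (vadd n1 w x2) (vadd_inv iw ix2)).
    rewrite !vlt_vadd ?vle_refl ?eqxx ?orbF; try congruence.
    move: l1 l2 => /andP[-> ->] /andP[-> ->]; by move/(_ isT).
  + exfalso; move: (H (vadd n1 x1 y2) (vadd_inv ix1 i2)).
    rewrite !vlt_vadd ?vle_refl ?eqxx ?orbF ?orbT; try congruence.
    by rewrite a b n1' n2'; move/(_ isT).
Qed.

Lemma LB n1 n2 x1 x2 w1 w2 : in_vec n1 x1 -> in_vec n2 x2 -> in_vec n1 w1 ->
  (forall y, pop_set (n1+n2) (vadd n1 x1 x2) y -> vle (vadd n1 w1 w2) y) <->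
  (forall y, pop_set n1 x1 y -> vle w1 y) /\ (forall y, pop_set n2 x2 y -> vle w2 y).
Proof.
move=> ix1 ix2 iw1; have sx := size_inv ix1; have sw := size_inv iw1.
split.
- move=> H; split => y [->|cv].
  + by move: (H _ (or_introl erefl)); rewrite vle_vadd ?sx // => /andP[].
  + have sy := size_inv (match cv with And4 a _ _ _ => a end).
    by move: (H _ (or_intror (cov_l cv ix2))); rewrite vle_vadd ?sy // => /andP[].
  + by move: (H _ (or_introl erefl)); rewrite vle_vadd ?sx // => /andP[].
  + by move: (H _ (or_intror (cov_r ix1 cv))); rewrite vle_vadd ?sx // => /andP[].
- case=> H1 H2 y [->|cv].
  + rewrite vle_vadd ?sx //; rewrite H1 ?H2 //; by left.
  + have [y1 [y2 [-> [[-> c2]|[-> c1]]]]] := cov_dec ix1 ix2 cv.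
    * rewrite vle_vadd ?sx // H1 ?H2 //; [by right | by left].
    * have sy := size_inv (match c1 with And4 a _ _ _ => a end).
      rewrite vle_vadd ?sy // H1 ?H2 //; [by left | by right].
Qed.

Lemma pop_inv n x z : is_pop n x z -> in_vec n z.
Proof. by case. Qed.

Lemma pop_le n x z : is_pop n x z -> vle z x.
Proof. case=> _ H _; apply: H; by left. Qed.

Lemma pop_add n1 n2 x1 x2 z1 z2 : in_vec n1 x1 -> in_vec n2 x2 ->
  is_pop n1 x1 z1 -> is_pop n2 x2 z2 -> is_pop (n1+n2) (vadd n1 x1 x2) (vadd n1 z1 z2).
Proof.
move=> ix1 ix2 p1 p2; have [iz1 l1 g1] := p1; have [iz2 l2 g2] := p2.
split; first exact: vadd_inv.
- by apply/(LB z2 ix1 ix2 iz1).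
- move=> w iw Hw.
  have [w1 [w2 [iw1 iw2 E]]] := down_split ix1 iw (Hw _ (or_introl erefl)).
  subst w; move/(LB w2 ix1 ix2 iw1): Hw => [h1 h2].
  rewrite vle_vadd ?(size_inv iw1) ?(size_inv iz1) //.
  by rewrite g1 ?g2.
Qed.

Lemma pop_dec n1 n2 x1 x2 z : in_vec n1 x1 -> in_vec n2 x2 ->
  is_pop (n1+n2) (vadd n1 x1 x2) z ->
  exists z1 z2, [/\ z = vadd n1 z1 z2, is_pop n1 x1 z1 & is_pop n2 x2 z2].
Proof.
move=> ix1 ix2 p; have [iz l g] := p.
have [z1 [z2 [iz1 iz2 E]]] := down_split ix1 iz (l _ (or_introl erefl)).
subst z; have [h1 h2] := (LB z2 ix1 ix2 iz1).1 l.
exists z1, z2; split => //; split => // w iw Hw.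
- have := g _ (vadd_inv iw iz2) ((LB z2 ix1 ix2 iw).2 (conj Hw h2)).
  by rewrite vle_vadd ?(size_inv iw) ?(size_inv iz1) // => /andP[].
- have := g _ (vadd_inv iz1 iw) ((LB w ix1 ix2 iz1).2 (conj h1 Hw)).
  by rewrite vle_vadd ?(size_inv iw) ?(size_inv iz1) // => /andP[].
Qed.

Lemma hd i : i = 2 * i./2 \/ i = 2 * i./2 + 1.
Proof. have := odd_double_half i; rewrite -muln2; case: (odd i) => /=; lia. Qed.

Definition bot n := mkseq (fun i => i./2) (2*n).

Lemma bot_in n : in_vec n (bot n).
Proof.
apply/in_vecP; split.
- by rewrite size_mkseq.
- move=> k kn; rewrite nth_mkseq; last lia. have := hd (2*k+1); lia.
- move=> i ilt; rewrite nth_mkseq //; have := hd i; lia.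
- move=> i j ij jlt; rewrite !nth_mkseq //; try lia; have := hd i; have := hd j; lia.
Qed.

Lemma bot_min n w : in_vec n w -> vle (bot n) w.
Proof.
move/in_vecP=> [s _ r _]; apply/vleP; rewrite size_mkseq s; split => // i.
case: (ltnP i (2*n)) => h.
- rewrite nth_mkseq //; have := r i h; have := hd i; lia.
- by rewrite nth_default // size_mkseq.
Qed.

Lemma is_bottomE n z : is_bottom n z <-> z = bot n.
Proof.
split.
- case=> iz H; apply: vle_anti; [apply: H; exact: bot_in | exact: bot_min].
- move=> ->; split; [exact: bot_in | exact: bot_min].
Qed.

Lemma bot_add n1 n2 : bot (n1+n2) = vadd n1 (bot n1) (bot n2).
Proof.
apply: (eq_from_nth (x0 := 0)); first by rewrite size_vadd !size_mkseq; lia.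
move=> i; rewrite size_mkseq => ilt; rewrite nth_vadd !size_mkseq nth_mkseq //.
case: ifP => h; first by rewrite nth_mkseq.
rewrite ifT; last lia. rewrite nth_mkseq; last lia.
have := hd i; have := hd (i - 2 * n1); lia.
Qed.

Lemma pop_iter0E n x z : pop_iter n 0 x z -> z = x.
Proof. by move=> H; inversion H. Qed.

Lemma pop_iterSE n t x z : pop_iter n t.+1 x z -> exists y, is_pop n x y /\ pop_iter n t y z.
Proof. move=> H; inversion H; subst; by exists y. Qed.

Lemma iter_add n1 n2 t : forall x1 x2, in_vec n1 x1 -> in_vec n2 x2 ->
  (pop_sortable (n1+n2) t (vadd n1 x1 x2) <-> pop_sortable n1 t x1 /\ pop_sortable n2 t x2).
Proof.
elim: t => [|t IH] x1 x2 ix1 ix2.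
- have sb := size_inv (bot_in n1).
  split.
  + case=> z [/pop_iter0E -> /is_bottomE]; rewrite bot_add => /vadd_inj [].
    * by rewrite sb (size_inv ix1).
    * move=> -> ->; split; [exists (bot n1) | exists (bot n2)]; (split; [exact: pop_iter0 | exact/is_bottomE]).
  + case=> [[z1 [/pop_iter0E -> /is_bottomE ->]] [z2 [/pop_iter0E -> /is_bottomE ->]]].
    exists (vadd n1 (bot n1) (bot n2)); split; first exact: pop_iter0.
    by apply/is_bottomE; rewrite bot_add.
- split.
  + case=> z [/pop_iterSE [y [py pz]] bz].
    have [y1 [y2 [E p1 p2]]] := pop_dec ix1 ix2 py; subst y.
    have [[z1 [q1 b1]] [z2 [q2 b2]]] : pop_sortable n1 t y1 /\ pop_sortable n2 t y2.
      by apply/(IH _ _ (pop_inv p1) (pop_inv p2)); exists z.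
    split; [exists z1 | exists z2]; split => //; econstructor; eauto.
  + case=> [[z1 [/pop_iterSE [y1 [p1 q1]] b1]] [z2 [/pop_iterSE [y2 [p2 q2]] b2]]].
    have [z [q b]] : pop_sortable (n1+n2) t (vadd n1 y1 y2).
      by apply/(IH _ _ (pop_inv p1) (pop_inv p2)); split; [exists z1 | exists z2].
    exists z; split => //; apply: (pop_iterS (y := vadd n1 y1 y2)) => //; exact: pop_add.
Qed.

Lemma in_vec0 w : in_vec 0 w -> w = [::].
Proof. by move/size_inv; case: w. Qed.

Lemma in_vec0nil : in_vec 0 [::].
Proof. by apply/in_vecP; split => // i; rewrite muln0. Qed.

Lemma sortable0 t : pop_sortable 0 t [::].
Proof.
exists [::]; split; last by split; [exact: in_vec0nil | move=> w /in_vec0 ->].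
elim: t => [|t IH]; first exact: pop_iter0.
apply: (pop_iterS (y := [::])) => //; split.
- exact: in_vec0nil.
- move=> y [->|[/in_vec0 -> _ _ _]] //.
- by move=> w /in_vec0 ->.
Qed.

Lemma list_lemma ds : (forall d, d \in ds -> in_vec d.1 d.2) ->
  in_vec (sumn (map fst ds)) (vsum ds) /\
  forall t, pop_sortable (sumn (map fst ds)) t (vsum ds) <-> (forall d, d \in ds -> pop_sortable d.1 t d.2).
Proof.
elim: ds => [|[k b] ds IH] H /=.
- split; first exact: in_vec0nil. by move=> t; split => // _; exact: sortable0.
- have ib : in_vec k b by apply: (H (k, b)); rewrite inE eqxx.
  have H' : forall d, d \in ds -> in_vec d.1 d.2.
    by move=> d hd; apply: H; rewrite inE hd orbT.
  have [ir Hr] := IH H'.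
  change (b ++ map (addn k) (vsum ds)) with (vadd k b (vsum ds)).
  split; first exact: vadd_inv.
  move=> t; rewrite iter_add // Hr; split.
  + case=> h1 h2 d; rewrite inE => /orP[/eqP -> //|]; exact: h2.
  + move=> h; split; first by apply: (h (k, b)); rewrite inE eqxx.
    move=> d hd; apply: h; by rewrite inE hd orbT.
Qed.

Lemma decomp n b : in_vec n b -> exists ds : seq (nat * seq nat),
  [/\ forall d, d \in ds -> [/\ 1 <= d.1, in_vec d.1 d.2 & irreducible_vec d.1 d.2],
      sumn (map fst ds) = n & vsum ds = b].
Proof.
elim/ltn_ind: n b => n IH b ib.
case: (posnP n) => [n0|npos].
- subst n; exists [::]; split => //; by rewrite (in_vec0 ib).
- have [s o r c] := (in_vecP n b).1 ib.
  set m := (nth 0 b 0).+1.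
  have r0 := r 0 ltac:(lia).
  have mn : m <= n by rewrite /m; lia.
  have iv : IV (m + (n - m)) b by rewrite subnKC.
  have hlt : forall i, i < 2 * m -> nth 0 b i < m.
    move=> i hi; case: (posnP i) => [->|ipos]; first by rewrite /m.
    have := c 0 i ipos ltac:(lia) ltac:(rewrite /m in hi; lia). rewrite /m; lia.
  have [A B E] := split_in iv hlt.
  have [ds [H1 H2 H3]] := IH (n - m) ltac:(rewrite /m; lia) _ ((in_vecP _ _).2 B).
  exists ((m, take (2*m) b) :: ds); split.
  + move=> d; rewrite inE => /orP[/eqP -> /=|]; last exact: H1.
    split => //; first exact/in_vecP.
    rewrite /irreducible_vec !nth_take0.
    have h1 : 0 < 2 * m by lia.
    have h2 : (2 * m).-1 < 2 * m by lia.
    rewrite h1 h2; apply/eqP.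
    have -> : (2 * m).-1 = 2 * (m - 1) + 1 by rewrite /m; lia.
    rewrite o; rewrite /m; lia.
  + rewrite /= H2; lia.
  + rewrite /= H3; exact: (esym E).
Qed.

Theorem lemma3p13 (n : nat) (b : seq nat) :
  1 <= n -> in_vec n b ->
  exists ds : seq (nat * seq nat),
    [/\ forall d, d \in ds -> [/\ 1 <= d.1, in_vec d.1 d.2 & irreducible_vec d.1 d.2],
        sumn (map fst ds) = n,
        vsum ds = b &
        forall t : nat,
          pop_sortable n t b <-> (forall d, d \in ds -> pop_sortable d.1 t d.2)].
Proof.
move=> _ ib; have [ds [H1 H2 H3]] := decomp ib.
exists ds; split => // t.
have [_ L] := list_lemma (fun d hd => match H1 d hd with And3 _ x _ => x end).
by rewrite -L H2 H3.
Qed.
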